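(* Let $R$ be a ring. (1) If $R$ is $\Gamma$-graded and quasi-Baer, then $R$ is graded quasi-Baer. (2) If $R$ is $\Gamma$-graded, graded quasi-Baer, and the (left and right) annihilators of its two-sided ideals are graded ideals, then $R$ is quasi-Baer.
   Context: Rings are associative, not necessarily unital. $R$ is $\Gamma$-graded ($\Gamma$ a group) if $R=\bigoplus_{\gamma\in\Gamma}R_\gamma$ with $R_\gamma R_\delta\subseteq R_{\gamma\delta}$; homogeneous elements are those of $\bigcup_\gamma R_\gamma$; a (one- or two-sided) ideal $I$ is graded if $I=\bigoplus_\gamma(I\cap R_\gamma)$. $\operatorname{ann}_r(X)=\{r\mid Xr=0\}$, $\operatorname{ann}_l(X)=\{r\mid rX=0\}$. $R$ is quasi-Baer if for every right ideal $I$ there is an idempotent $\varepsilon\in R$ with $\operatorname{ann}_r(I)=\varepsilon R$ (this is left-right symmetric, and equivalent to requiring it for two-sided ideals $I$; it forces $R$ to be unital). $R$ is graded quasi-Baer if for every graded right ideal $I$ there is a homogeneous idempotent $\varepsilon\in R$ with $\operatorname{ann}_r(I)=\varepsilon R$ (likewise left-right symmetric and equivalent to the version with graded two-sided ideals). *)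

(* Defs.v *)
(* Non-unital associative rings are modelled as a zmodType
   carrier with an explicit associative, biadditive multiplication. *)
From Stdlib Require List.
From mathcomp Require Import all_boot all_algebra.
Set Implicit Arguments. Unset Strict Implicit. Unset Printing Implicit Defensive.
Import GRing.Theory.
Local Open Scope ring_scope.

Definition is_group (G : Type) (gmul : G -> G -> G) (g1 : G) (ginv : G -> G) : Prop :=
  (forall a b c, gmul a (gmul b c) = gmul (gmul a b) c) /\
  (forall a, gmul g1 a = a) /\ (forall a, gmul a g1 = a) /\
  (forall a, gmul (ginv a) a = g1) /\ (forall a, gmul a (ginv a) = g1).

Definition is_ring (R : zmodType) (mul : R -> R -> R) : Prop :=
  (forall x y z, mul x (mul y z) = mul (mul x y) z) /\
  (forall x y z, mul (x + y) z = mul x z + mul y z) /\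
  (forall x y z, mul x (y + z) = mul x y + mul x z).

Definition lsum (G : Type) (R : zmodType) (s : seq (G * R)) : R :=
  \sum_(p <- s) p.2.

(* R = (+)_{g in G} Rg g  with  Rg g * Rg h <= Rg (g h). *)
Definition is_grading (G : Type) (gmul : G -> G -> G) (R : zmodType)
    (mul : R -> R -> R) (Rg : G -> R -> Prop) : Prop :=
  (forall g, Rg g 0) /\
  (forall g x y, Rg g x -> Rg g y -> Rg g (x - y)) /\
  (forall g h x y, Rg g x -> Rg h y -> Rg (gmul g h) (mul x y)) /\
  (forall r : R, exists s : seq (G * R),
      List.NoDup (map fst s) /\ List.Forall (fun p => Rg p.1 p.2) s /\ r = lsum s) /\
  (forall s : seq (G * R),
      List.NoDup (map fst s) -> List.Forall (fun p => Rg p.1 p.2) s -> lsum s = 0 ->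
      List.Forall (fun p => p.2 = 0) s).

Definition homogeneous (G : Type) (R : zmodType) (Rg : G -> R -> Prop) (x : R) : Prop :=
  exists g, Rg g x.

Definition is_right_ideal (R : zmodType) (mul : R -> R -> R) (I : R -> Prop) : Prop :=
  I 0 /\ (forall x y, I x -> I y -> I (x - y)) /\ (forall x r, I x -> I (mul x r)).

Definition is_left_ideal (R : zmodType) (mul : R -> R -> R) (I : R -> Prop) : Prop :=
  I 0 /\ (forall x y, I x -> I y -> I (x - y)) /\ (forall x r, I x -> I (mul r x)).

Definition is_ideal (R : zmodType) (mul : R -> R -> R) (I : R -> Prop) : Prop :=
  is_right_ideal mul I /\ is_left_ideal mul I.

(* I = (+)_g (I /\ Rg g): every element of I is a finite sum of homogeneous
   elements of I of pairwise distinct degrees. *)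
Definition graded_set (G : Type) (R : zmodType) (Rg : G -> R -> Prop) (I : R -> Prop) : Prop :=
  forall x, I x -> exists s : seq (G * R),
    List.NoDup (map fst s) /\ List.Forall (fun p => Rg p.1 p.2 /\ I p.2) s /\ x = lsum s.

Definition ann_r (R : zmodType) (mul : R -> R -> R) (X : R -> Prop) : R -> Prop :=
  fun r => forall x, X x -> mul x r = 0.

Definition ann_l (R : zmodType) (mul : R -> R -> R) (X : R -> Prop) : R -> Prop :=
  fun r => forall x, X x -> mul r x = 0.

Definition ann_r_is_eR (R : zmodType) (mul : R -> R -> R) (I : R -> Prop) (e : R) : Prop :=
  forall y, ann_r mul I y <-> exists r, y = mul e r.

Definition quasi_Baer (R : zmodType) (mul : R -> R -> R) : Prop :=
  forall I, is_right_ideal mul I ->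
    exists e, mul e e = e /\ ann_r_is_eR mul I e.

Definition graded_quasi_Baer (G : Type) (R : zmodType) (mul : R -> R -> R)
    (Rg : G -> R -> Prop) : Prop :=
  forall I, is_right_ideal mul I -> graded_set Rg I ->
    exists e, homogeneous Rg e /\ mul e e = e /\ ann_r_is_eR mul I e.

(* Main.v *)
Require Import Defs.
From Stdlib Require Import ClassicalEpsilon.
From Stdlib Require List.
From mathcomp Require Import all_boot all_algebra.
Set Implicit Arguments. Unset Strict Implicit. Unset Printing Implicit Defensive.
Import GRing.Theory.
Local Open Scope ring_scope.

Section Gr.
Variables (G : Type) (gmul : G -> G -> G) (g1 : G) (ginv : G -> G).
Hypothesis hG : is_group gmul g1 ginv.
Variables (R : zmodType) (mul : R -> R -> R).
Hypothesis hR : is_ring mul.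
Variable Rg : G -> R -> Prop.
Hypothesis hgr : is_grading gmul mul Rg.

Definition deqb (a b : G) : bool :=
  if excluded_middle_informative (a = b) then true else false.

Lemma deqbP a b : reflect (a = b) (deqb a b).
Proof. rewrite /deqb; case: excluded_middle_informative => h; by constructor. Qed.

Lemma deqbb a : deqb a a.
Proof. by apply/deqbP. Qed.

Definition sumdeg (s : seq (G * R)) g := \sum_(p <- s | deqb p.1 g) p.2.

Lemma mul0l x : mul 0 x = 0.
Proof.
case: hR => _ [hl _]. have := hl 0 0 x. rewrite addr0 => hh.
by move: (congr1 (fun z => z - mul 0 x) hh); rewrite subrr addrK => e; rewrite -e.
Qed.

Lemma mul0r x : mul x 0 = 0.
Proof.
case: hR => _ [_ hr]. have := hr x 0 0. rewrite addr0 => hh.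
by move: (congr1 (fun z => z - mul x 0) hh); rewrite subrr addrK => e; rewrite -e.
Qed.

Lemma mul_suml (T : Type) (s : seq T) (P : pred T) (F : T -> R) y :
  mul (\sum_(p <- s | P p) F p) y = \sum_(p <- s | P p) mul (F p) y.
Proof.
apply: (big_morph (fun x => mul x y)); last exact: mul0l.
by move=> a b; case: hR => _ [hl _].
Qed.

Lemma mul_sumr (T : Type) (s : seq T) (P : pred T) (F : T -> R) y :
  mul y (\sum_(p <- s | P p) F p) = \sum_(p <- s | P p) mul y (F p).
Proof.
apply: (big_morph (fun x => mul y x)); last exact: mul0r.
by move=> a b; case: hR => _ [_ hr].
Qed.

Lemma Rg0 g : Rg g 0.
Proof. by case: hgr. Qed.
Lemma RgB g x y : Rg g x -> Rg g y -> Rg g (x - y).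
Proof. by case: hgr => _ [h _]; apply: h. Qed.
Lemma RgN g x : Rg g x -> Rg g (- x).
Proof. by move=> hx; rewrite -sub0r; apply: RgB => //; apply: Rg0. Qed.
Lemma RgD g x y : Rg g x -> Rg g y -> Rg g (x + y).
Proof. by move=> hx hy; rewrite -(opprK y); apply: RgB => //; apply: RgN. Qed.
Lemma RgM g h x y : Rg g x -> Rg h y -> Rg (gmul g h) (mul x y).
Proof. by case: hgr => _ [_ [hm _]]; apply: hm. Qed.

Lemma Rg_sumdeg s g : List.Forall (fun p => Rg p.1 p.2) s -> Rg g (sumdeg s g).
Proof.
elim: s => [|p s IH] hs; first by rewrite /sumdeg big_nil; apply: Rg0.
inversion hs; subst. rewrite /sumdeg big_cons.
case: (deqbP p.1 g) => e; last exact: IH.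
apply: RgD; [by rewrite -e | exact: IH].
Qed.

Lemma sum_In_eq (T : Type) (s : seq T) (P : pred T) (F H : T -> R) :
  (forall p, List.In p s -> F p = H p) ->
  \sum_(p <- s | P p) F p = \sum_(p <- s | P p) H p.
Proof.
elim: s => [|p s IH] hs; first by rewrite !big_nil.
rewrite !big_cons hs /=; last by left.
by rewrite IH // => q hq; apply: hs; right.
Qed.

Lemma sum_In_zero (T : Type) (s : seq T) (P : pred T) (F : T -> R) :
  (forall p, List.In p s -> F p = 0) -> \sum_(p <- s | P p) F p = 0.
Proof.
move=> h; rewrite (@sum_In_eq _ _ _ _ (fun _ => 0)) //; exact: big1.
Qed.

Lemma In_filter (T : Type) (P : pred T) (s : seq T) p :
  List.In p (filter P s) -> List.In p s /\ P p.
Proof.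
elim: s => [|q s IH] /=; first by [].
destruct (P q) eqn:hq; simpl => hin.
  case: hin => [e|h]; first by subst q; split => //; left.
  by case: (IH h) => a b; split => //; right.
by case: (IH hin) => a b; split => //; right.
Qed.

Lemma nodup_filter (P : pred (G * R)) (s : seq (G * R)) :
  List.NoDup (map fst s) -> List.NoDup (map fst (filter P s)).
Proof.
elim: s => [|q s IH] //= hn; inversion hn; subst.
case: (P q) => /=; last exact: IH.
constructor; last exact: IH.
move=> /List.in_map_iff [p [e hp]]; apply: H1.
case: (In_filter hp) => hp' _.
by apply/List.in_map_iff; exists p.
Qed.

Lemma sumdeg_notin s g : ~ List.In g (map fst s) -> sumdeg s g = 0.
Proof.
elim: s => [|q s IH] hn; first by rewrite /sumdeg big_nil.
rewrite /sumdeg big_cons. case: (deqbP q.1 g) => e.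
  by exfalso; apply: hn; left.
by apply: IH => h; apply: hn; right.
Qed.

Lemma nodup_sumdeg s p : List.NoDup (map fst s) -> List.In p s -> sumdeg s p.1 = p.2.
Proof.
elim: s => [|q s IH] //= hn; inversion hn; subst.
rewrite /sumdeg big_cons -/(sumdeg s p.1). case=> [e|hp].
  by subst q; rewrite deqbb sumdeg_notin // addr0.
case: (deqbP q.1 p.1) => e.
  by exfalso; apply: H1; rewrite e; apply/List.in_map_iff; exists p.
exact: IH.
Qed.

Lemma collapse s : List.Forall (fun p => Rg p.1 p.2) s ->
  exists t, List.NoDup (map fst t) /\ List.Forall (fun p => Rg p.1 p.2) t /\
    lsum t = lsum s /\ forall g, sumdeg t g = sumdeg s g.
Proof.
elim: s => [|[g0 a] s IH] hs.
  by exists [::]; split; [constructor | split; [constructor | split]].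
inversion hs; subst. case: (IH H2) => t [tn [tf [tl ts]]].
set Q := fun p : G * R => ~~ deqb p.1 g0.
exists ((g0, a + sumdeg t g0) :: filter Q t); split; [|split; [|split]].
- constructor; last exact: nodup_filter.
  move=> /List.in_map_iff [p [e hp]]; case: (In_filter hp) => _ hq.
  by move: hq; rewrite /Q e deqbb.
- constructor; first by apply: RgD => //; apply: Rg_sumdeg.
  apply/List.Forall_forall => p hp0; case: (In_filter hp0) => hp _.
  by move: tf => /List.Forall_forall; apply.
- rewrite /lsum !big_cons /= big_filter -/(lsum s) -tl /lsum (bigID (fun p => deqb p.1 g0) predT) /=.
  by rewrite addrA.
- move=> g; rewrite /sumdeg !big_cons /= big_filter_cond -/(sumdeg t g0).
  case: (deqbP g0 g) => e.
    subst g. rewrite big_pred0; last by move=> p; rewrite /Q; case: deqb.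
    by rewrite addr0 ts.
  rewrite -/(sumdeg s g) -ts /sumdeg; apply: eq_bigl => p; rewrite /Q.
  case: (deqbP p.1 g) => e2; last by rewrite andbF.
  by rewrite andbT; apply/deqbP => e3; apply: e; rewrite -e3.
Qed.

Lemma zero_sum s : List.Forall (fun p => Rg p.1 p.2) s -> lsum s = 0 ->
  forall g, sumdeg s g = 0.
Proof.
move=> hs h0 g. case: (collapse hs) => t [tn [tf [tl ts]]].
rewrite -ts; case: hgr => _ [_ [_ [_ h5]]].
have := h5 t tn tf; rewrite tl h0 => /(_ erefl) /List.Forall_forall hz.
by apply: sum_In_zero.
Qed.

Lemma sumdeg_map (k : G -> G) (c : R -> R) s g :
  injective k -> (forall x y, c (x + y) = c x + c y) -> c 0 = 0 ->
  sumdeg (map (fun p => (k p.1, c p.2)) s) (k g) = c (sumdeg s g).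
Proof.
move=> hk hc h0; rewrite /sumdeg big_map /=.
rewrite (big_morph c hc h0); apply: eq_bigl => p.
by apply/deqbP/deqbP => [/hk|->].
Qed.

Lemma lsum_map (c : R -> R) (k : G * R -> G) s :
  (forall x y, c (x + y) = c x + c y) -> c 0 = 0 ->
  lsum (map (fun p => (k p, c p.2)) s) = c (lsum s).
Proof.
by move=> hc h0; rewrite /lsum big_map /= (big_morph c hc h0).
Qed.


Lemma gcancel_l h a b : gmul h a = gmul h b -> a = b.
Proof.
case: hG => ga [l1 [r1 [lv rv]]] e.
by rewrite -(l1 a) -(l1 b) -(lv h) -!ga e.
Qed.

Lemma gcancel_r h a b : gmul a h = gmul b h -> a = b.
Proof.
case: hG => ga [l1 [r1 [lv rv]]] e.
by rewrite -(r1 a) -(r1 b) -(rv h) !ga e.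
Qed.

Lemma Forall_map_deg (k : G * R -> G) (c : G * R -> R) s :
  (forall p, List.In p s -> Rg (k p) (c p)) ->
  List.Forall (fun p => Rg p.1 p.2) (map (fun p => (k p, c p)) s).
Proof.
move=> h; apply/List.Forall_forall => p /List.in_map_iff [q [<- hq]] /=.
exact: h.
Qed.

Lemma key h x sy : Rg h x -> List.Forall (fun p => Rg p.1 p.2) sy ->
  mul x (lsum sy) = 0 -> forall g, mul x (sumdeg sy g) = 0.
Proof.
move=> hx hsy h0 g.
have hadd : forall a b, mul x (a + b) = mul x a + mul x b by case: hR => _ [].
rewrite -(@sumdeg_map (gmul h) (mul x)) //; last exact: mul0r; last exact: gcancel_l.
apply: zero_sum.
  apply: Forall_map_deg => p hp /=; apply: RgM => //.
  by move: hsy => /List.Forall_forall; apply.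
by rewrite (@lsum_map (mul x) (fun p => gmul h p.1)) //; exact: mul0r.
Qed.

Lemma key2 k q sx : Rg k q -> List.Forall (fun p => Rg p.1 p.2) sx ->
  mul (lsum sx) q = q -> mul (sumdeg sx g1) q = q.
Proof.
move=> hq hsx h0.
have hadd : forall a b, mul (a + b) q = mul a q + mul b q by case: hR => _ [].
set L := (k, - q) :: map (fun p => (gmul p.1 k, mul p.2 q)) sx.
have hL : List.Forall (fun p => Rg p.1 p.2) L.
  constructor; first exact: RgN.
  apply: Forall_map_deg => p hp /=; apply: RgM => //.
  by move: hsx => /List.Forall_forall; apply.
have hs : lsum L = 0.
  rewrite /L /lsum big_cons /= -/(lsum _).
  rewrite (@lsum_map (fun a => mul a q) (fun p => gmul p.1 k)) //; last exact: mul0l.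
  by rewrite h0 addNr.
have := zero_sum hL hs k.
rewrite /sumdeg big_cons /= deqbb -/(sumdeg _ k).
have e1 : k = gmul g1 k by case: hG => _ [l1 _]; rewrite l1.
rewrite {2}e1 (@sumdeg_map (fun g => gmul g k) (fun a => mul a q)) //; last exact: mul0l.
  by move=> /eqP; rewrite addrC subr_eq0 => /eqP.
by move=> a b /gcancel_r.
Qed.

Lemma ann_comp I y sy q : graded_set Rg I -> ann_r mul I y ->
  List.NoDup (map fst sy) -> List.Forall (fun p => Rg p.1 p.2) sy -> y = lsum sy ->
  List.In q sy -> ann_r mul I q.2.
Proof.
move=> hIg hy sn sf ey hq x hx.
case: (hIg x hx) => sx [_ [sxf ->]].
rewrite /lsum mul_suml; apply: sum_In_zero => p hp.
move: sxf => /List.Forall_forall /(_ p hp) [hp1 hp2].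
rewrite -(nodup_sumdeg sn hq); apply: (key hp1 sf).
by rewrite -ey; apply: hy.
Qed.

Lemma part1 : quasi_Baer mul -> graded_quasi_Baer mul Rg.
Proof.
move=> hqb I hI hIg. case: (hqb I hI) => e [hee hann].
have eann : ann_r mul I e by apply/hann; exists e.
case: hgr => _ [_ [_ [hdec _]]].
case: (hdec e) => se [sen [sef see]].
pose f := sumdeg se g1.
have fann : ann_r mul I f.
  move=> x hx; case: (hIg x hx) => sx [_ [sxf ->]].
  rewrite /lsum mul_suml; apply: sum_In_zero => p hp.
  move: sxf => /List.Forall_forall /(_ p hp) [hp1 hp2].
  apply: (key hp1 sef); rewrite -see; exact: eann.
have fid : forall y, ann_r mul I y -> mul f y = y.
  move=> y hy; case: (hdec y) => sy [syn [syf ey]].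
  rewrite ey /lsum mul_sumr; apply: sum_In_eq => q hq.
  have qa := ann_comp hIg hy syn syf ey hq.
  move: syf => /List.Forall_forall /(_ q hq) hq1.
  apply: (key2 hq1 sef); rewrite -see.
  case: (proj1 (hann _) qa) => r ->.
  by case: hR => ga _; rewrite ga hee.
exists f; split; [|split].
- by exists g1; apply: Rg_sumdeg.
- exact: fid.
- move=> y; split; first by move=> hy; exists y; rewrite fid.
  case=> r -> x hx; case: hR => ga _; rewrite ga (fann x hx); exact: mul0l.
Qed.

Lemma mulrB' x a b : mul x (a - b) = mul x a - mul x b.
Proof.
case: hR => _ [_ hr]. rewrite hr; congr (_ + _).
have : mul x (- b) + mul x b = 0 by rewrite -hr addNr mul0r.
by move=> /eqP; rewrite addr_eq0 => /eqP.
Qed.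

Lemma part2 : graded_quasi_Baer mul Rg ->
   (forall I, is_ideal mul I ->
      (is_ideal mul (ann_l mul I) /\ graded_set Rg (ann_l mul I)) /\
      (is_ideal mul (ann_r mul I) /\ graded_set Rg (ann_r mul I))) ->
   quasi_Baer mul.
Proof.
move=> hgq hann I hI.
case: hI => hI0 [hIB hIM].
pose J := ann_r mul I.
have hJ : is_ideal mul J.
  split; split; [| split| |split].
  - by move=> x _; rewrite mul0r.
  - by move=> a b ha hb x hx; rewrite mulrB' ha // hb // subrr.
  - by move=> a r ha x hx; case: hR => ga _; rewrite ga ha // mul0l.
  - by move=> x _; rewrite mul0r.
  - by move=> a b ha hb x hx; rewrite mulrB' ha // hb // subrr.
  - by move=> a r ha x hx; case: hR => ga _; rewrite ga ha //; apply: hIM.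
pose K := ann_l mul J.
case: (hann J hJ) => [[hK hKg] _].
have IK : forall x, I x -> K x by move=> x hx y hy; apply: hy.
have annKI : forall y, ann_r mul K y <-> ann_r mul I y.
  move=> y; split; first by move=> h x hx; apply: h; apply: IK.
  by move=> hy x hx; apply: hx.
case: (hgq K hK.1 hKg) => e [_ [hee he]].
exists e; split => // y; rewrite -annKI; exact: he.
Qed.

End Gr.

Theorem proposition4p3
  (G : Type) (gmul : G -> G -> G) (g1 : G) (ginv : G -> G)
  (hG : is_group gmul g1 ginv)
  (R : zmodType) (mul : R -> R -> R) (hR : is_ring mul)
  (Rg : G -> R -> Prop) (hgr : is_grading gmul mul Rg) :
  (quasi_Baer mul -> graded_quasi_Baer mul Rg) /\
  (graded_quasi_Baer mul Rg ->
   (forall I, is_ideal mul I ->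
      (is_ideal mul (ann_l mul I) /\ graded_set Rg (ann_l mul I)) /\
      (is_ideal mul (ann_r mul I) /\ graded_set Rg (ann_r mul I))) ->
   quasi_Baer mul).
Proof.
split; [apply: part1; eassumption | apply: part2; eassumption].
Qed.
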